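(* Let $q$ be a prime power and $k,m,n,h,r$ positive integers. If $U$ is an $(h,r)_q$-evasive $[n,k]_{q^m/q}$ system with $r<hm$, then $U$ is $(2h,\,r+hm-1)_q$-evasive, i.e. every $\mathbb F_{q^m}$-subspace $H$ of $\mathbb F_{q^m}^k$ with $\dim_{\mathbb F_{q^m}}(H)=2h$ satisfies $\dim_{\mathbb F_q}(U\cap H)\le r+hm-1$.
   Context: An $[n,k]_{q^m/q}$ system is an $\mathbb F_q$-subspace $U$ of $\mathbb F_{q^m}^k$ with $\dim_{\mathbb F_q}(U)=n$ and $\langle U\rangle_{\mathbb F_{q^m}}=\mathbb F_{q^m}^k$. For positive integers $h<k$ and $r$, $U$ is called $(h,r)_q$-evasive if $\dim_{\mathbb F_q}(U\cap H)\le r$ for every $\mathbb F_{q^m}$-subspace $H$ of $\mathbb F_{q^m}^k$ with $\dim_{\mathbb F_{q^m}}(H)=h$. *)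

(* Defs.v *)
From HB Require Import structures.
From mathcomp Require Import all_boot all_order all_algebra all_field.
Set Implicit Arguments. Unset Strict Implicit. Unset Printing Implicit Defensive.
Import GRing.Theory.
Local Open Scope ring_scope.

(* F = F_q (a finite field), L = F_{q^m} (an extension of F of degree m).
   The ambient space F_{q^m}^k is modelled as V := {ffun 'I_k -> L}, which is
   canonically an F-vector space (vectType F); F_q-subspaces are {vspace V}. *)

Section Defs.
Variables (F : finFieldType) (L : fieldExtType F) (k : nat).
Notation V := {ffun 'I_k -> L}.

Definition vec (v : V) : 'rV[L]_k := \row_i v i.

Definition is_Lsubspace (W : {vspace V}) : Prop :=
  forall (a : L) (v : V), v \in W -> [ffun i => a * v i] \in W.

(* matrix whose rows are an F-basis of W; its L-row space is <W>_{F_{q^m}} *)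
Definition Lspan_mx (W : {vspace V}) : 'M[L]_(\dim W, k) :=
  \matrix_(j < \dim W) vec (tnth (vbasis W) j).

Definition dimL (W : {vspace V}) : nat := \rank (Lspan_mx W).

Definition is_system (n : nat) (U : {vspace V}) : Prop :=
  \dim U = n /\ dimL U = k.

Definition evasive (h r : nat) (U : {vspace V}) : Prop :=
  (0 < h)%N /\ (h < k)%N /\ (0 < r)%N /\
  forall H : {vspace V}, is_Lsubspace H -> dimL H = h ->
    (\dim (U :&: H) <= r)%N.
End Defs.

(* Main.v *)
Require Import Defs.
From HB Require Import structures.
From mathcomp Require Import all_boot all_order all_algebra all_field.
From mathcomp Require Import zify.
Set Implicit Arguments. Unset Strict Implicit. Unset Printing Implicit Defensive.
Import GRing.Theory.
Section Helpers.
Local Open Scope ring_scope.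

Section Aux.
Variables (F : finFieldType) (L : fieldExtType F).

Lemma ffZE n (c : F) (v : {ffun 'I_n -> L}) i : (c *: v) i = c%:A * v i.
Proof. by rewrite ffunE mulr_algl. Qed.

Lemma vecZ n (c : F) (v : {ffun 'I_n -> L}) : vec (c *: v) = c%:A *: vec v.
Proof. by apply/rowP=> i; rewrite !mxE ffZE. Qed.

Lemma vecD n (u v : {ffun 'I_n -> L}) : vec (u + v) = vec u + vec v.
Proof. by apply/rowP=> i; rewrite !mxE ffunE. Qed.

Lemma vec_sum n I (r : seq I) (P : pred I) (f : I -> {ffun 'I_n -> L}) :
  vec (\sum_(j <- r | P j) f j) = \sum_(j <- r | P j) vec (f j).
Proof. by apply/rowP=> i; rewrite !mxE sum_ffunE summxE; apply: eq_bigr => j _; rewrite mxE. Qed.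

Definition mxf n n' (M : 'M[L]_(n, n')) (v : {ffun 'I_n -> L}) : {ffun 'I_n' -> L} :=
  [ffun j => (vec v *m M) 0 j].

Fact mxf_lin n n' (M : 'M[L]_(n, n')) : linear (mxf M).
Proof.
move=> c u v; apply/ffunP=> j; rewrite !(ffunE, ffZE) !mxE.
rewrite -mulr_algl mulr_sumr -big_split /=.
by apply: eq_bigr => i _; rewrite !mxE ffunE ffZE mulrDl mulrA.
Qed.
HB.instance Definition _ n n' (M : 'M[L]_(n, n')) :=
  GRing.isLinear.Build F _ _ _ (mxf M) (mxf_lin M).

Lemma mxfE n n' (M : 'M[L]_(n, n')) v : vec (mxf M v) = vec v *m M.
Proof. by apply/rowP=> j; rewrite [LHS]mxE ffunE. Qed.

Lemma vec_inj n : injective (@vec F L n).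
Proof. by move=> u v e; apply/ffunP=> i; move/rowP: e => /(_ i); rewrite !mxE. Qed.

Lemma vec_eq0 n (v : {ffun 'I_n -> L}) : (vec v == 0) = (v == 0).
Proof.
apply/eqP/eqP=> [e|->]; last by apply/rowP=> i; rewrite !mxE ffunE.
by apply: vec_inj; rewrite e; apply/rowP=> i; rewrite !mxE ffunE.
Qed.

Definition Vsp n p (A : 'M[L]_(p, n)) : {vspace {ffun 'I_n -> L}} :=
  lker (linfun (mxf (cokermx A))).

Lemma mem_Vsp n p (A : 'M[L]_(p, n)) v : (v \in Vsp A) = (vec v <= A)%MS.
Proof. by rewrite memv_ker lfunE /= -vec_eq0 mxfE submxE. Qed.


Lemma memLspan k (W : {vspace {ffun 'I_k -> L}}) v : v \in W -> (vec v <= Lspan_mx W)%MS.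
Proof.
move=> vW; rewrite (coord_vbasis vW) vec_sum; apply: summx_sub => j _.
rewrite vecZ scalemx_sub // (_ : vec _ = row j (Lspan_mx W)) ?row_sub //.
by rewrite rowK -tnth_nth.
Qed.

Lemma Lspan_mem k (W : {vspace {ffun 'I_k -> L}}) v :
  is_Lsubspace W -> (vec v <= Lspan_mx W)%MS -> v \in W.
Proof.
move=> HW /submxP[D eD].
have -> : v = \sum_j [ffun i => D 0 j * tnth (vbasis W) j i].
  apply/ffunP=> i; move/rowP: eD => /(_ i); rewrite !mxE sum_ffunE => ->.
  by apply: eq_bigr => j _; rewrite !mxE ffunE.
apply: rpred_sum => j _; apply: HW; exact: vbasis_mem (mem_tnth _ _).
Qed.

Lemma Vsp_L k p (A : 'M[L]_(p, k)) : is_Lsubspace (Vsp A).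
Proof.
move=> a v; rewrite !mem_Vsp => sv.
rewrite (_ : vec _ = a *: vec v) ?scalemx_sub //.
by apply/rowP=> i; rewrite !mxE ffunE.
Qed.

Lemma Lspan_Vsp k p (A : 'M[L]_(p, k)) : (Lspan_mx (Vsp A) == A)%MS.
Proof.
apply/andP; split; apply/row_subP => i.
  by rewrite rowK -mem_Vsp; exact: vbasis_mem (mem_tnth _ _).
have e : row i A = vec [ffun j => A i j] by apply/rowP=> j; rewrite !mxE ffunE.
by rewrite e; apply: memLspan; rewrite mem_Vsp -e row_sub.
Qed.

Lemma dim_Vsp k p (A : 'M[L]_(p, k)) : \dim (Vsp A) = (\rank A * \dim {:L})%N.
Proof.
set R := row_base A.
pose g := linfun (mxf R).
have ginj : lker g == 0%VS.
  apply/lker0P => c c' e; rewrite !lfunE /= in e; apply: vec_inj.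
  by apply: (row_free_inj (row_base_free A)); rewrite /= -!mxfE e.
have -> : Vsp A = limg g.
  apply/vspaceP => v; apply/idP/idP.
    rewrite mem_Vsp => vA; have vR : (vec v <= R)%MS by rewrite eq_row_base.
    apply/memv_imgP; exists [ffun j => (vec v *m pinvmx R) 0 j]; first exact: memvf.
    rewrite lfunE; apply: vec_inj; rewrite /= mxfE.
    have -> : vec [ffun j => (vec v *m pinvmx R) 0 j] = vec v *m pinvmx R.
      by apply/rowP=> j; rewrite [LHS]mxE ffunE.
    by rewrite mulmxKpV.
  by case/memv_imgP => c _ ->; rewrite mem_Vsp lfunE /= mxfE -(eq_row_base A) submxMl.
rewrite limg_dim_eq; last by rewrite (eqP ginj) capv0.
rewrite dimvf /dim /= card_ord dimvf //.
Qed.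

Section Pair.
Variables (k : nat) (phi : {linear L -> F^o}).
Notation V := {ffun 'I_k -> L}.

Definition Psi (a : V) (v : V) : F^o := phi (\sum_i v i * a i).

Fact Psi_lin a : linear (Psi a).
Proof.
move=> c u v; rewrite /Psi -linearP /=; congr (phi _).
rewrite scaler_sumr -big_split /=; apply: eq_bigr => i _.
by rewrite ffunE ffZE mulrDl -mulrA mulr_algl.
Qed.
HB.instance Definition _ a := GRing.isLinear.Build F _ _ _ (Psi a) (Psi_lin a).

Definition Phi n (X : n.-tuple V) (a : V) : {ffun 'I_n -> F^o} :=
  [ffun j => Psi a (tnth X j)].

Fact Phi_lin n (X : n.-tuple V) : linear (Phi X).
Proof.
move=> c u v; apply/ffunP=> j; rewrite !ffunE /Psi -linearP /=; congr (phi _).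
rewrite scaler_sumr -big_split /=; apply: eq_bigr => i _.
by rewrite ffunE ffZE mulrDr mulrCA mulr_algl.
Qed.
HB.instance Definition _ n X := GRing.isLinear.Build F _ _ _ (@Phi n X) (Phi_lin X).
End Pair.

End Aux.


Lemma main_lemma (F : finFieldType) (L : fieldExtType F) (k m h r : nat)
  (U H : {vspace {ffun 'I_k -> L}}) :
  \dim {:L} = m -> (0 < h)%N -> (r < h * m)%N -> evasive h r U ->
  is_Lsubspace H -> dimL H = (2 * h)%N ->
  (\dim (U :&: H) <= r + h * m - 1)%N.
Proof.
move=> dL h0 rhm [_ [_ [_ ev]]] LH dH.
have m0 : (0 < m)%N by case: m rhm {dL} => //; rewrite muln0.
set B := row_base (Lspan_mx H).
have rB : \rank B = (2 * h)%N by rewrite /B eq_row_base.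
have HB : H = Vsp B.
  apply/vspaceP => v; rewrite mem_Vsp /B eq_row_base.
  by apply/idP/idP => [/memLspan|/(Lspan_mem LH)].
have hk : (2 * h <= k)%N by rewrite -dH rank_leq_col.
have dimH : \dim H = (2 * h * m)%N by rewrite HB dim_Vsp rB dL.
rewrite leqNgt; apply/negP => big.
have big' : (r + h * m <= \dim (U :&: H))%N.
  have hm0 : (0 < h * m)%N by rewrite muln_gt0 h0 m0.
  lia.
pose W := <<take (r + h * m) (vbasis (U :&: H))>>%VS.
have dimW : \dim W = (r + h * m)%N.
  have fr := basis_free (vbasisP (U :&: H)).
  rewrite -(cat_take_drop (r + h * m) (vbasis (U :&: H))) in fr.
  move/catl_free/eqnP: fr; rewrite /W => ->.
  by rewrite size_takel // size_tuple.
have WUH : (W <= U :&: H)%VS.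
  by apply/span_subvP => x /mem_take /vbasis_mem.
have i0 : 'I_(\dim (fullv : {vspace L})) by rewrite dL; exact: Ordinal m0.
pose phi : {linear L -> F^o} := coord (vbasis fullv) i0.
pose x0 := (vbasis (fullv : {vspace L}))`_i0.
have phix0 : phi x0 = 1.
  by rewrite /phi /x0 /= coord_free ?eqxx // (basis_free (vbasisP fullv)).
pose wb := vbasis W.
pose Ph := linfun (Phi phi wb).
have dimK : (k * m - (r + h * m) <= \dim (lker Ph))%N.
  have := limg_ker_dim Ph fullv; rewrite capfv.
  have : (\dim (limg Ph) <= \dim W)%N.
    by apply: leq_trans (dimvS (subvf _)) _; rewrite dimvf /dim /= card_ord muln1.
  have -> : \dim (fullv : {vspace {ffun 'I_k -> L}}) = (k * m)%N.
    by rewrite dimvf /dim /= card_ord -dL dimvf.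
  lia.
pose Ann := Vsp (kermx B^T).
have dimAnn : \dim Ann = ((k - 2 * h) * m)%N.
  by rewrite dim_Vsp mxrank_ker mxrank_tr rB dL.
have [a aK aAnn] : exists2 a, a \in lker Ph & a \notin Ann.
  apply/subvPn; apply/negP => sub; move/dimvS: sub; rewrite dimAnn => le.
  have := leq_trans dimK le; rewrite mulnBl.
  have e2 : (2 * h * m = 2 * (h * m))%N by rewrite mulnA.
  have km : (2 * h * m <= k * m)%N by rewrite leq_mul2r hk orbT.
  lia.
have memH v : (v \in H) = (vec v <= B)%MS.
  by rewrite /B eq_row_base; apply/idP/idP => [/memLspan|/(Lspan_mem LH)].
have [v0 v0H Pv0] : exists2 v0, v0 \in H & Psi phi a v0 != 0.
  move: aAnn; rewrite mem_Vsp sub_kermx => nz.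
  have : ~~ [forall j, (vec a *m B^T) 0 j == 0].
    apply: contra nz => /forallP Hj; apply/eqP/rowP => j; rewrite [RHS]mxE; exact/eqP/Hj.
  rewrite negb_forall => /existsP[j Hj].
  pose v1 : {ffun 'I_k -> L} := [ffun i => B j i].
  have ev1 : vec v1 = row j B.
    by apply/rowP=> i; rewrite [LHS]mxE /v1 ffunE [RHS]mxE.
  have v1H : v1 \in H by rewrite memH ev1 row_sub.
  set c := \sum_i v1 i * a i.
  have c0 : c != 0.
    have ec : (vec a *m B^T) 0 j = c.
      rewrite mxE /c; apply: eq_bigr => i _.
      by rewrite [vec a 0 _]mxE [B^T _ _]mxE /v1 ffunE mulrC.
    by rewrite -ec.
  exists [ffun i => (x0 / c) * v1 i]; first exact: LH.
  rewrite /Psi.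
  have -> : \sum_i [ffun i => x0 / c * v1 i] i * a i = x0.
    under eq_bigr => i _ do rewrite ffunE -mulrA.
    by rewrite -mulr_sumr -/c mulfVK.
  by rewrite phix0 oner_neq0.
pose S := (H :&: lker (linfun (Psi phi a)))%VS.
have SH : (S <= H)%VS by apply: capvSl.
have dimS : (\dim S < \dim H)%N.
  rewrite (ltn_leqif (dimv_leqif_eq SH)); apply/negP => /eqP eS.
  move: v0H; rewrite -eS memv_cap memv_ker lfunE /= => /andP[_ /eqP e].
  by move: Pv0; rewrite /Psi => /eqP; apply; exact: e.
have WS : (W <= S)%VS.
  rewrite subv_cap (subv_trans WUH (capvSr _ _)) /=.
  have -> : W = <<wb>>%VS by rewrite (span_basis (vbasisP W)).
  apply/span_subvP => x /tnthP[j ->]; rewrite memv_ker lfunE /=.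
  move: aK; rewrite memv_ker lfunE /= => /eqP/ffunP/(_ j); rewrite !ffunE.
  by move=> e; apply/eqP; exact: e.
pose K := kermx (vec a)^T.
pose D := (B :&: K)%MS.
have rD : (h <= \rank D)%N.
  have := mxrank_sum_cap B K; rewrite /K mxrank_ker rB.
  have := rank_leq_col (vec a)^T; have := rank_leq_col (B + kermx (vec a)^T)%MS.
  rewrite /D /K. lia.
pose C := (pid_mx h : 'M_(\rank D)) *m row_base D.
have rC : \rank C = h by rewrite mxrankMfree ?row_base_free // rank_pid_mx.
pose H1 := Vsp C.
have dH1 : dimL H1 = h by rewrite /dimL (eqmx_rank (Lspan_Vsp C)).
have dimH1 : \dim H1 = (h * m)%N by rewrite dim_Vsp rC dL.
have H1S : (H1 <= S)%VS.
  apply/subvP => v; rewrite mem_Vsp => vC.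
  have vD : (vec v <= D)%MS.
    by apply: (submx_trans vC); apply: (submx_trans (submxMl _ _)); rewrite eq_row_base.
  rewrite memv_cap memH (submx_trans vD (capmxSl _ _)) /= memv_ker lfunE /=.
  have : (vec v <= K)%MS := submx_trans vD (capmxSr _ _).
  rewrite sub_kermx => /eqP/matrixP/(_ 0 0); rewrite [RHS]mxE => e.
  apply/eqP; rewrite /Psi.
  have -> : \sum_i v i * a i = 0.
    apply: (etrans _ e); rewrite mxE; apply: eq_bigr => i _; rewrite !mxE //.
  exact: linear0.
have := ev H1 (@Vsp_L _ _ _ _ C) dH1.
have := dimv_sum_cap W H1.
have : (\dim (W + H1) <= \dim S)%N by apply: dimvS; rewrite subv_add WS H1S.
have : (\dim (W :&: H1) <= \dim (U :&: H1))%N.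
  by apply: dimvS; apply: capvS => //; apply: subv_trans WUH (capvSl _ _).
have e2 : (2 * h * m = 2 * (h * m))%N by rewrite mulnA.
lia.
Qed.

End Helpers.
Unset Implicit Arguments.

Theorem proposition3p2 (F : finFieldType) (L : fieldExtType F)
  (k m n h r : nat) (U : {vspace {ffun 'I_k -> L}}) :
  \dim {:L} = m ->
  (0 < k)%N -> (0 < m)%N -> (0 < n)%N -> (0 < h)%N -> (0 < r)%N ->
  is_system n U ->
  evasive h r U ->
  (r < h * m)%N ->
  forall H : {vspace {ffun 'I_k -> L}},
    is_Lsubspace H -> dimL H = (2 * h)%N ->
    (\dim (U :&: H) <= r + h * m - 1)%N.
Proof.
move=> dL _ _ _ h0 _ _ ev rhm H LH dH.
exact: (main_lemma dL h0 rhm ev LH dH).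
Qed.
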